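(* Consider a ROS~2 application executed on a single processor by the events executor with the two-queue mechanism described in the context, under the standing assumptions of the context (including LIFO-ordered delivery of messages by the communication middleware and LIFO tie-breaking among equal priorities). At every scheduling decision, the scheduling logic schedules a highest-priority released subtask.
   Context: Model: a ROS~2 application is abstracted (by unfolding: each subscription callback with several parents is virtually duplicated so each copy has one parent) as a forest of trees of subtasks (callbacks). Roots (timers or externally triggered subscriptions) are released periodically or sporadically, and each root job has a known integer priority, which may vary between jobs (e.g., deadlines for EDF). A child subtask is released immediately when its parent completes (and only then), and inherits its parent's priority (fixed job-level priority). Callbacks spawn no threads, do not block on I/O and have bounded execution time; execution is non-preemptive on a single processor, so preemption can only occur between subtasks. Larger priority values mean higher priority. Executor mechanism: a released root subtask is pushed into a priority queue (root_queue) ordered by priority; a released child subtask is assigned the value latest_priority and pushed onto a LIFO queue (child_queue); at each scheduling decision the top elements of the two queues are compared, the one of greater priority is popped and executed, and latest_priority is set to its priority. Messages consumed by subscriptions are delivered by the middleware in LIFO order. *)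

(* Defs.v *)
From HB Require Import structures.
From mathcomp Require Import all_boot all_order all_algebra.
Set Implicit Arguments. Unset Strict Implicit. Unset Printing Implicit Defensive.
Import Order.TTheory GRing.Theory Num.Theory.
Local Open Scope ring_scope.

Section Model.
Variable T : finType.  (* the (unfolded) subtasks / callbacks *)

Definition is_forest (parent : T -> option T) : Prop :=
  forall t : T, exists n : nat, iter n (fun o => obind parent o) (Some t) = None.

Definition is_root (parent : T -> option T) (t : T) : bool := parent t == None.

(* A job (released instance of a subtask) with its true (fixed job-level)
   priority; larger value = higher priority. *)
Record job := Job { jtask : T; jprio : int }.

(* An entry of an executor queue: the job, the key under which it is ordered
   in the queue, and an insertion time stamp (used for LIFO tie-breaking). *)
Record entry := Entry { ejob : job; ekey : int; estamp : nat }.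

Record state := State {
  root_queue : seq entry;      (* priority queue (bag, top = best) *)
  child_queue : seq entry;     (* LIFO stack, head = top *)
  latest_priority : int;
  clock : nat }.

Definition init_state (l0 : int) : state := State [::] [::] l0 0.

Definition better (e1 e2 : entry) : bool :=
  (ekey e2 < ekey e1) || ((ekey e1 == ekey e2) && (estamp e2 < estamp e1)%N).

Fixpoint best (s : seq entry) : option entry :=
  match s with
  | [::] => None
  | e :: s' => match best s' with
               | None => Some e
               | Some b => Some (if better b e then b else e)
               end
  end.

(* Scheduling decision: compare the tops of the two queues and take the one
   of greater priority (LIFO tie-breaking). The boolean tells whether the
   root queue was popped. *)
Definition choose (st : state) : option (entry * bool) :=
  match best (root_queue st), child_queue st with
  | None, [::] => None
  | Some r, [::] => Some (r, true)
  | None, c :: _ => Some (c, false)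
  | Some r, c :: _ => if better r c then Some (r, true) else Some (c, false)
  end.

Definition scheduled (st : state) : option entry := omap fst (choose st).

Definition released (st : state) : seq job :=
  map ejob (root_queue st ++ child_queue st).

Definition push_children (cs : seq T) (p key : int) (q : seq entry) (k : nat)
  : seq entry * nat :=
  foldl (fun acc c => (Entry (Job c p) key acc.2 :: acc.1, acc.2.+1)) (q, k) cs.

Inductive event :=
  | Release of T & int   (* external/periodic release of a root job with its priority *)
  | Decide.

(* One scheduling decision: pop the chosen entry, set latest_priority to its
   key, execute it non-preemptively; on completion its children are released
   onto the child queue. *)
Definition decide_step (children : T -> seq T) (st : state) : state :=
  match choose st with
  | None => st
  | Some (e, from_root) =>
      let rq := if from_root
                then filter (fun x => estamp x != estamp e) (root_queue st)
                else root_queue st in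
      let cq := if from_root then child_queue st else behead (child_queue st) in
      let l := ekey e in
      let pc := push_children (children (jtask (ejob e))) (jprio (ejob e)) l cq (clock st) in
      State rq pc.1 l pc.2
  end.

Definition release_step (r : T) (p : int) (st : state) : state :=
  State (Entry (Job r p) p (clock st) :: root_queue st) (child_queue st)
        (latest_priority st) (clock st).+1.

Definition step (children : T -> seq T) (st : state) (ev : event) : state :=
  match ev with
  | Release r p => release_step r p st
  | Decide => decide_step children st
  end.

Definition run (children : T -> seq T) (l0 : int) (evs : seq event) : state :=
  foldl (step children) (init_state l0) evs.

Definition release_ok (parent : T -> option T) (ev : event) : bool :=
  match ev with
  | Release r _ => is_root parent r
  | Decide => true
  end.

End Model.

(* Main.v *)
Require Import Defs.
From mathcomp Require Import all_boot all_order all_algebra.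
Import Order.TTheory GRing.Theory Num.Theory.
Set Implicit Arguments. Unset Strict Implicit.
Local Open Scope ring_scope.

Section Aux.
Variable T : finType.

Definition Rk (a b : entry T) : bool := ekey b <= ekey a.

Lemma Rk_trans : transitive Rk.
Proof. move=> b a c; rewrite /Rk => h1 h2; exact: le_trans h2 h1. Qed.

Definition Inv (st : state T) : bool :=
  all (fun x => ekey x == jprio (ejob x)) (root_queue st ++ child_queue st)
  && sorted Rk (child_queue st).

Lemma best_none (s : seq (entry T)) : best s = None -> s = [::].
Proof. case: s => //= e s; by case: (best s). Qed.

Lemma all_comb (P Q R : pred (entry T)) s :
  (forall x, P x -> Q x -> R x) -> all P s -> all Q s -> all R s.
Proof. move=> H; elim: s => //= x s IH /andP[a b] /andP[c d]; by rewrite H // IH. Qed.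

Lemma best_some (s : seq (entry T)) b : best s = Some b ->
  (forall P : pred (entry T), all P s -> P b) /\ all (fun x => ekey x <= ekey b) s.
Proof.
elim: s b => //= e s IH b.
case E: (best s) => [b'|].
  have [Hin Hall] := IH _ E.
  case Hb: (better b' e) => -[<-].
    split; first by move=> P /= /andP[_ /Hin].
    rewrite /= Hall andbT.
    move: Hb; rewrite /better => /orP[/ltW //|/andP[/eqP -> _]] //.
  split; first by move=> P /= /andP[].
  have Hle : ekey b' <= ekey e.
    move: Hb; rewrite /better => /negbT; rewrite negb_or => /andP[H _].
    by rewrite leNgt.
  rewrite /= lexx /=; apply: sub_all Hall => x /= Hx; exact: le_trans Hle.
move=> [<-]; rewrite (best_none E) /= lexx; by split=> // P /andP[].
Qed.

Lemma push_ok cs p (q : seq (entry T)) k :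
  sorted Rk q -> all (fun x => ekey x <= p) q ->
  all (fun x => ekey x == jprio (ejob x)) q ->
  let r := (push_children cs p p q k).1 in
  [&& sorted Rk r, all (fun x => ekey x <= p) r &
      all (fun x => ekey x == jprio (ejob x)) r].
Proof.
elim: cs q k => [|c cs IH] q k Hs Ha Hj /=; first by rewrite Hs Ha Hj.
rewrite /push_children /=.
apply: IH => /=; last by rewrite eqxx Hj.
  case: q Hs Ha {Hj} => //= x q -> /andP[H _]; by rewrite /Rk /= H.
by rewrite lexx Ha.
Qed.

Lemma choose_max (st : state T) e b : Inv st -> Defs.choose st = Some (e, b) ->
  [/\ all (fun x => ekey x <= ekey e) (root_queue st ++ child_queue st),
      (if b then True
       else child_queue st = e :: behead (child_queue st)) &
      ekey e == jprio (ejob e)].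
Proof.
case: st => rq cq lp ck; rewrite /Inv /Defs.choose /=.
move=> /andP[Hj Hs].
have Hcq : forall c cq', cq = c :: cq' -> all (fun x => ekey x <= ekey c) cq.
  move=> c cq' Ec; move: Hs; rewrite Ec /= lexx /= => Hp.
  have := order_path_min Rk_trans Hp; by [].
move: Hj; rewrite all_cat => /andP[Hjr Hjc].
case E: (best rq) => [r|]; case Ec: cq => [|c cq'] //.
- move=> [<- <-]; have [Hin Ha] := best_some E.
  by rewrite cats0 Ha; split=> //; exact: (Hin (fun x => ekey x == jprio (ejob x)) Hjr).
- have [Hin Ha] := best_some E. have Hc := Hcq _ _ Ec. rewrite -Ec.
  case Hb: (better r c) => -[<- <-].
  + have Hcr : ekey c <= ekey r.
      move: Hb; rewrite /better => /orP[/ltW //|/andP[/eqP -> _]] //.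
    split=> //; last by exact: (Hin (fun x => ekey x == jprio (ejob x)) Hjr).
    rewrite all_cat Ha /=; apply: sub_all Hc => x /= Hx; exact: le_trans Hcr.
  + have Hrc : ekey r <= ekey c.
      move: Hb; rewrite /better => /negbT; rewrite negb_or => /andP[H _].
      by rewrite leNgt.
    split; first (rewrite all_cat Hc andbT; apply: sub_all Ha => x /= Hx;
      exact: le_trans Hrc).
    * by rewrite Ec.
    * by move: Hjc; rewrite Ec /= => /andP[].
- move=> [<- <-]; rewrite (best_none E) /= -Ec; split.
  + by have := Hcq _ _ Ec; rewrite Ec.
  + by [].
  + by move: Hjc; rewrite Ec /= => /andP[].
Qed.

Lemma step_inv children (st : state T) ev : Inv st -> Inv (step children st ev).
Proof.
move=> HI; case: ev => [r p|] /=.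
  move: HI; rewrite /Inv /release_step /= eqxx /=; by [].
rewrite /decide_step.
case Ech: (Defs.choose st) => [[e b]|] //.
have [Hmax Hpos Hke] := choose_max HI Ech.
move: HI; rewrite /Inv => /andP[Hj Hs] /=.
rewrite (eqP Hke).
set rq := (if b then _ else _).
set cq := (if b then _ else _).
clear Ech.
have Hcq : [&& sorted Rk cq, all (fun x => ekey x <= jprio (ejob e)) cq &
   all (fun x => ekey x == jprio (ejob x)) cq].
  rewrite -(eqP Hke) /cq; clear rq; case: b Hpos cq => Hpos cq.
    rewrite Hs /=; rewrite all_cat in Hmax; rewrite all_cat in Hj.
    by case/andP: Hmax => _ ->; case/andP: Hj => _ ->.
  rewrite Hpos /= in Hs Hmax Hj.
  rewrite all_cat in Hmax; rewrite all_cat in Hj.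
  case/andP: Hmax => _ /= /andP[_ ->]; case/andP: Hj => _ /= /andP[_ ->].
  by rewrite andbT; case: (behead _) Hs => //= x l /andP[_ ->].
case/and3P: Hcq => H1 H2 H3.
rewrite all_cat; case/and3P: (push_ok (children (jtask (ejob e))) (clock st) H1 H2 H3) => -> _ ->.
rewrite !andbT /rq; case: b {Hpos cq H1 H2 H3 rq}.
  rewrite all_filter; move: Hj; rewrite all_cat => /andP[Hj _].
  by apply: sub_all Hj => x /= ->; rewrite implybT.
by move: Hj; rewrite all_cat => /andP[].
Qed.

Lemma run_inv children (st : state T) evs : Inv st -> Inv (foldl (step children) st evs).
Proof. elim: evs st => //= ev evs IH st H; apply: IH; exact: step_inv. Qed.

End Aux.

Theorem theorem1 (T : finType) (parent : T -> option T) (children : T -> seq T)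
  (Hforest : is_forest parent)
  (Hchildren : forall s c : T, (c \in children s) = (parent c == Some s))
  (Huniq : forall s : T, uniq (children s))
  (l0 : int) (evs : seq (event T)) :
  all (release_ok parent) evs ->
  forall e : entry T, scheduled (run children l0 evs) = Some e ->
  all (fun x => jprio x <= jprio (ejob e)) (released (run children l0 evs)).
Proof.
move=> _ e.
have HI : Inv (run children l0 evs) by apply: run_inv.
rewrite /scheduled; case Ech: (Defs.choose _) => [[e' b]|] //= [<-].
have [Hmax _ Hke] := choose_max HI Ech.
move: HI => /andP[Hj _].
rewrite /released all_map; apply: (all_comb _ Hmax Hj) => x /= H1 /eqP H2.
by rewrite -(eqP Hke) -H2.
Qed.
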